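(* Let $Q$ be a quantum circuit acting on $w$ qubits and $N$ a positive integer. Let $R^{(N)}$ be the circuit on $Nw+1$ qubits, consisting of a single-qubit register $\mathsf{O}$ (the first qubit) and, for each $j\in\{1,\dots,N\}$, a $(w-1)$-qubit register $\mathsf{R}_j$ and a single-qubit register $\mathsf{X}_j$, which for $j=1,\dots,N$ in turn applies $Q$ to $(\mathsf{O},\mathsf{R}_j)$ (with $\mathsf{O}$ as $Q$'s first qubit) and then the CNOT with control $\mathsf{O}$ and target $\mathsf{X}_j$; its output qubit is $\mathsf{O}$. Then \[p_{\mathrm{acc}}(R^{(N)},1)=\frac12+\frac12\bigl(2p_{\mathrm{acc}}(Q,1)-1\bigr)^N.\]
   Context: For a circuit $Q$ on $w$ qubits and $1\le k\le w$, $p_{\mathrm{acc}}(Q,k)=\mathrm{tr}\,\Pi_{\mathrm{acc}}Q\rho^{(w,k)}_{\mathrm{init}}Q^\dagger$, where $\rho^{(w,k)}_{\mathrm{init}}=(|0\rangle\langle0|)^{\otimes k}\otimes(I/2)^{\otimes(w-k)}$ and $\Pi_{\mathrm{acc}}=|0\rangle\langle0|\otimes I^{\otimes(w-1)}$; i.e., the first $k$ qubits start in $|0\rangle$, the remaining qubits are maximally mixed, and acceptance means the first qubit is measured as $0$ in the computational basis. For $R^{(N)}$ the first qubit is $\mathsf{O}$, so only $\mathsf{O}$ is clean. *)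

(* Defs.v *)
(* Quantum operators on n qubits are represented as complex
   (algC) matrices indexed by computational basis states, i.e. bit strings
   {ffun 'I_n -> bool}; qubit 0 is the "first" qubit. *)
From HB Require Import structures.
From mathcomp Require Import all_boot all_order all_algebra algC.
Set Implicit Arguments. Unset Strict Implicit. Unset Printing Implicit Defensive.
Import Order.TTheory GRing.Theory Num.Theory.
Local Open Scope ring_scope.

Notation bits n := {ffun 'I_n -> bool}.

(* A y x = <y| A |x> *)
Definition op (n : nat) := bits n -> bits n -> algC.

Definition opmul n (A B : op n) : op n :=
  fun y x => \sum_(z : bits n) A y z * B z x.
Definition opadj n (A : op n) : op n := fun y x => (A x y)^*.
Definition opid n : op n := fun y x => (y == x)%:R.
Definition optr n (A : op n) : algC := \sum_(x : bits n) A x x.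

(* a circuit is (represented by) a unitary operator *)
Definition unitary n (U : op n) : Prop :=
  (forall y x, opmul U (opadj U) y x = @opid n y x) /\
  (forall y x, opmul (opadj U) U y x = @opid n y x).

Definition Pi_acc n : op n :=
  fun y x => ((y == x) && [forall i : 'I_n, (val i == 0%N) ==> ~~ y i])%:R.

(* rho_init^{(n,k)} = (|0><0|)^{(x)k} (x) (I/2)^{(x)(n-k)} *)
Definition rho_init n (k : nat) : op n :=
  fun y x => (y == x)%:R *
    \prod_(i : 'I_n) (if (val i < k)%N then (~~ x i)%:R else 2^-1).

Definition p_acc n (Q : op n) (k : nat) : algC :=
  optr (opmul (opmul (opmul (@Pi_acc n) Q) (@rho_init n k)) (opadj Q)).

(* embedding of an m-qubit gate U acting on the qubits s 0, ..., s (m-1)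
   (in this order) of an n-qubit system; identity on the other qubits *)
Definition embed m n (s : 'I_m -> 'I_n) (U : op m) : op n :=
  fun y x =>
    if [forall i : 'I_n, ~~ [exists k : 'I_m, s k == i] ==> (y i == x i)]
    then U [ffun k => y (s k)] [ffun k => x (s k)] else 0.

Definition CNOT2 : op 2 :=
  fun y x => ((y ord0 == x ord0) && (y ord_max == xorb (x ord_max) (x ord0)))%:R.

(* Layout of R^{(N)} on N*w+1 qubits: qubit 0 is O; for the (j+1)-th block
   (j = 0..N-1), R_{j+1} is qubits 1+j*w, ..., j*w+w-1 and X_{j+1} is
   qubit 1+j*w+(w-1). *)
Definition sigQ (w N j : nat) : 'I_w -> 'I_(N * w).+1 :=
  fun i => inord (if val i == 0%N then 0%N else (1 + j * w + (val i).-1)%N).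
Definition sigX (w N j : nat) : 'I_2 -> 'I_(N * w).+1 :=
  fun i => inord (if val i == 0%N then 0%N else (1 + j * w + w.-1)%N).

Fixpoint Rpart w N (Q : op w) (m : nat) : op (N * w).+1 :=
  match m with
  | 0 => @opid _
  | m'.+1 => opmul (opmul (embed (@sigX w N m') CNOT2) (embed (@sigQ w N m') Q))
                   (@Rpart w N Q m')
  end.

Definition Rcirc w N (Q : op w) : op (N * w).+1 := @Rpart w N Q N.
Arguments Rcirc {w} N Q.

(* Main.v *)
Require Import Defs.
From mathcomp Require Import all_boot all_order all_algebra algC.
From mathcomp Require Import ring zify.
Import Order.TTheory GRing.Theory Num.Theory.
Local Open Scope ring_scope.

Set Implicit Arguments.
Definition ow k n (s : 'I_k -> 'I_n) (y : bits n) (u : bits k) : bits n :=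
  [ffun i => if [pick j | s j == i] is Some j then u j else y i].

Lemma ow_in k n (s : 'I_k -> 'I_n) y u j : injective s -> ow s y u (s j) = u j.
Proof.
move=> inj; rewrite ffunE; case: pickP => [j' /eqP/inj -> //|/(_ j)]; by rewrite eqxx.
Qed.

Lemma ow_out k n (s : 'I_k -> 'I_n) y u i : (forall j, s j != i) -> ow s y u i = y i.
Proof. by move=> H; rewrite ffunE; case: pickP => [j' /eqP E|//]; have := H j'; rewrite E eqxx. Qed.

Lemma split_sum k n (s : 'I_k -> 'I_n) (f : bits n -> algC) : injective s ->
  \sum_(y : bits n) f y =
  \sum_(y : bits n | [forall j, y (s j) == false]) \sum_(u : bits k) f (ow s y u).
Proof.
move=> inj.
rewrite pair_big_dep /=.
pose h (p : bits n * bits k) := ow s p.1 p.2.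
pose h' (y : bits n) := (ow s y [ffun=> false], [ffun j => y (s j)]).
rewrite (reindex_onto h h') /=; last first.
  move=> y _; apply/ffunP=> i; rewrite /h /h' /=.
  case: (pickP (fun j => s j == i)) => [j /eqP <-|H].
    by rewrite ow_in // ffunE.
  by rewrite !ow_out // => j; rewrite H.
apply: eq_bigl => [[y u]]; rewrite /h /h' /=.
rewrite andbT; apply/idP/forallP => [/eqP [E1 E2] j|H].
  by rewrite -E1 ow_in // ffunE.
apply/eqP.
congr pair; apply/ffunP => i.
  case: (pickP (fun j => s j == i)) => [j /eqP <-|H'].
    by rewrite ow_in // ffunE (eqP (H j)).
  by rewrite !ow_out // => j; rewrite H'.
by rewrite ffunE ow_in.
Qed.

Definition flip0 n (u : bits n.+1) : bits n.+1 :=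
  [ffun i => if i == ord0 then ~~ u i else u i].

Lemma flip0K n : involutive (@flip0 n).
Proof. move=> u; apply/ffunP=> i; rewrite !ffunE; case: eqP => //= _; exact: negbK. Qed.

Lemma sum_flip0 n (g : bits n.+1 -> algC) e :
  \sum_(u : bits n.+1) (u ord0 == e)%:R * g u =
  \sum_(u : bits n.+1) (u ord0 == ~~ e)%:R * g (flip0 u).
Proof.
rewrite (reindex_inj (can_inj (@flip0K n))) /=.
apply: eq_bigr => u _; rewrite /flip0 ffunE eqxx.
by case: (u ord0); case: e.
Qed.

Lemma card_bits n : #|{: bits n}| = (2 ^ n)%N.
Proof. by rewrite card_ffun card_bool card_ord. Qed.

Lemma count0 n e : \sum_(u : bits n.+1) (u ord0 == e)%:R = 2 ^+ n :> algC.
Proof.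
have H : forall e, \sum_(u : bits n.+1) (u ord0 == e)%:R =
               \sum_(u : bits n.+1) (u ord0 == ~~ e)%:R :> algC.
  move=> e'; have := @sum_flip0 n (fun _ => 1) e'.
  by rewrite /=; under eq_bigr do rewrite mulr1; under [in RHS]eq_bigr do rewrite mulr1.
have T : \sum_(u : bits n.+1) (u ord0 == e)%:R + \sum_(u : bits n.+1) (u ord0 == ~~ e)%:R
           = 2 ^+ n.+1 :> algC.
  rewrite -big_split /= (eq_bigr (fun _ => 1)); last first.
    by move=> u _; case: (u ord0); case: e; rewrite /= ?addr0 ?add0r.
  by rewrite sumr_const card_bits natrX.
rewrite -H in T; apply: (@mulfI _ 2); first by rewrite pnatr_eq0.
by rewrite -exprS -T mulr_natl mulr2n.
Qed.

Lemma rho1E n (v z : bits n.+1) :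
  rho_init 1 v z = (v == z)%:R * ((~~ z ord0)%:R * 2^-1 ^+ n).
Proof.
rewrite /rho_init big_ord_recl /=; congr (_ * (_ * _)).
by rewrite (eq_bigr (fun _ => 2^-1)) ?prodr_const ?card_ord // => i _; rewrite /bump /=.
Qed.

Lemma PiE n (y x : bits n.+1) : Pi_acc y x = ((y == x) && ~~ y ord0)%:R.
Proof.
rewrite /Pi_acc; congr (_ && _)%:R; apply/forallP/idP => [/(_ ord0) //|H i].
by apply/implyP => /eqP i0; have -> : i = ord0 by apply: val_inj.
Qed.

Lemma pacc_formula n (U : op n.+1) : p_acc U 1 = 2^-1 ^+ n *
  \sum_(y : bits n.+1) \sum_(x : bits n.+1)
     (y ord0 == false)%:R * (x ord0 == false)%:R * (U y x * (U y x)^*).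
Proof.
rewrite /p_acc /optr /opmul /opadj mulr_sumr; apply: eq_bigr => y _.
rewrite mulr_sumr; apply: eq_bigr => x _.
rewrite (eq_bigr (fun v => (~~ y ord0)%:R * U y v * rho_init 1 v x)); last first.
  move=> v _; congr (_ * _); rewrite (bigD1 y) //= big1 ?addr0; last first.
    by move=> u /negbTE uy; rewrite PiE eq_sym uy mul0r.
  by rewrite PiE eqxx.
rewrite (bigD1 x) //= big1 ?addr0; last first.
  by move=> v /negbTE vx; rewrite rho1E vx !mul0r mulr0.
rewrite rho1E eqxx.
case: (y ord0); case: (x ord0); rewrite /= ?mul0r ?mulr0 ?mul1r ?mulr1 //.
all: ring.
Qed.

Unset Implicit Arguments.
Definition bq w N j (k : 'I_w.+1) : 'I_(N * w.+1).+1 :=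
  inord (if val k == 0%N then j * w.+1 + w.+1 else j * w.+1 + k)%N.
Definition Xp w N j : 'I_(N * w.+1).+1 := bq w N j ord0.

Lemma bq_val w N j k : (j < N)%N ->
  nat_of_ord (bq w N j k) = (if val k == 0%N then j * w.+1 + w.+1 else j * w.+1 + k)%N.
Proof.
move=> jN; rewrite /bq inordK //; have := ltn_ord k.
have : (j.+1 * w.+1 <= N * w.+1)%N by rewrite leq_mul2r.
case: eqP => _; lia.
Qed.

Lemma Xp_val w N j : (j < N)%N -> nat_of_ord (Xp w N j) = (j * w.+1 + w.+1)%N.
Proof. by move=> jN; rewrite /Xp bq_val. Qed.

Lemma sigQ_val w N j k : (j < N)%N ->
  nat_of_ord (@sigQ w.+1 N j k) = (if val k == 0%N then 0 else j * w.+1 + k)%N.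
Proof.
move=> jN; have : (j.+1 * w.+1 <= N * w.+1)%N by rewrite leq_mul2r.
rewrite /sigQ; case: k => [[|k] Hk] /= H; rewrite inordK //; lia.
Qed.

Lemma sigX_val w N j k : (j < N)%N ->
  nat_of_ord (@sigX w.+1 N j k) = (if val k == 0%N then 0 else j * w.+1 + w.+1)%N.
Proof.
move=> jN; have : (j.+1 * w.+1 <= N * w.+1)%N by rewrite leq_mul2r.
rewrite /sigX; case: k => [[|k] Hk] /= H; rewrite inordK //; lia.
Qed.

Lemma bq_inj w N j : (j < N)%N -> injective (bq w N j).
Proof.
move=> jN k l /(congr1 (@nat_of_ord _)); rewrite !bq_val // => E; apply: val_inj.
move: E; case: k l => [k Hk] [l Hl] /=.
case: eqP => Hk'; case: eqP => Hl' /=; lia.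
Qed.

Definition cnotf w N m (y : bits (N * w.+1).+1) : bits (N * w.+1).+1 :=
  [ffun i => if i == Xp w N m then xorb (y (Xp w N m)) (y ord0) else y i].

Lemma Xp_neq0 w N m : (m < N)%N -> (Xp w N m == ord0) = false.
Proof. by move=> mN; rewrite -val_eqE /= Xp_val // addnS. Qed.

Lemma sigX_img w N m i : (m < N)%N ->
  [exists k, @sigX w.+1 N m k == i] = (i == ord0) || (i == Xp w N m).
Proof.
move=> mN; apply/existsP/orP => [[k /eqP <-]|[] /eqP ->].
- case: k => [[|[|k]] Hk] //.
  + by left; rewrite -val_eqE /= sigX_val.
  + by right; rewrite -val_eqE /= sigX_val // Xp_val.
- by exists ord0; rewrite -val_eqE /= sigX_val.
- by exists ord_max; rewrite -val_eqE /= sigX_val // Xp_val.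
Qed.

Lemma embedX w N m (y u : bits (N * w.+1).+1) : (m < N)%N ->
  embed (@sigX w.+1 N m) CNOT2 y u = (u == cnotf w N m y)%:R.
Proof.
move=> mN; rewrite /embed /CNOT2 !ffunE.
have -> : @sigX w.+1 N m ord0 = ord0 by apply: val_inj; rewrite /= sigX_val.
have -> : @sigX w.+1 N m ord_max = Xp w N m by apply: val_inj; rewrite /= sigX_val // Xp_val.
set c := [forall i, _].
have -> : forall b : bool, (if c then b%:R else 0) = (c && b)%:R :> algC by case: c.
congr (_ %:R); congr (nat_of_bool _); apply/idP/eqP => [/andP [/forallP Hc /andP [/eqP E0 /eqP E1]]|Eu].
  apply/ffunP => i; rewrite ffunE; case: eqP => [->|/eqP iX].
    by rewrite E1 -E0; case: (u _); case: (y ord0).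
  case: (eqVneq i ord0) => [Ei|i0]; first by rewrite Ei E0.
  by have := Hc i; rewrite sigX_img // (negbTE i0) (negbTE iX) /= => /eqP.
rewrite /c Eu !ffunE eqxx (eq_sym ord0) Xp_neq0 // eqxx /=; apply/andP; split; last first.
  by apply/eqP; case: (y _); case: (y _).
apply/forallP => i; rewrite sigX_img // negb_or; apply/implyP => /andP [_ iX].
by rewrite ffunE (negbTE iX).
Qed.

Definition inR w N m (i : 'I_(N * w.+1).+1) : bool :=
  (m * w.+1 < i < m * w.+1 + w.+1)%N.

Lemma sigQ_img w N m i : (m < N)%N ->
  [exists k, @sigQ w.+1 N m k == i] = (i == ord0) || inR w N m i.
Proof.
move=> mN; rewrite /inR; apply/existsP/orP => [[k /eqP <-]|].
- rewrite sigQ_val //; case: k => [[|k] Hk] /=.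
  + by left; apply/eqP; apply: val_inj; rewrite /= sigQ_val.
  + by right; lia.
- case=> [/eqP ->|H].
    by exists ord0; apply/eqP; apply: val_inj; rewrite /= sigQ_val.
  have Hk : (i - m * w.+1 < w.+1)%N by lia.
  exists (Ordinal Hk); apply/eqP; apply: val_inj; rewrite /= sigQ_val //=.
  case: eqP => /= H'; lia.
Qed.

Definition qarg w N j (b : bool) (y : bits (N * w.+1).+1) : bits w.+1 :=
  [ffun k => if val k == 0%N then b else y (bq w N j k)].

Lemma qargE w N j b (y : bits (N * w.+1).+1) k :
  qarg w N j b y k = if val k == 0%N then b else y (bq w N j k).
Proof. by rewrite ffunE. Qed.

Lemma sigQ_qarg w N m (y : bits (N * w.+1).+1) : (m < N)%N ->
  [ffun k => y (@sigQ w.+1 N m k)] = qarg w N m (y ord0) y.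
Proof.
move=> mN; apply/ffunP => k; rewrite !ffunE.
case: eqP => [k0|/eqP k0]; congr (y _); apply: val_inj; rewrite /= sigQ_val //.
  by rewrite k0.
by rewrite bq_val // (negbTE k0).
Qed.

Lemma embedQ w N m (Q : op w.+1) (u z : bits (N * w.+1).+1) : (m < N)%N ->
  embed (@sigQ w.+1 N m) Q u z =
  [forall i, ~~ ((i == ord0) || inR w N m i) ==> (u i == z i)]%:R *
  Q (qarg w N m (u ord0) u) (qarg w N m (z ord0) z).
Proof.
move=> mN; rewrite /embed !sigQ_qarg //.
have -> : [forall i, ~~ [exists k, @sigQ w.+1 N m k == i] ==> (u i == z i)] =
          [forall i, ~~ ((i == ord0) || inR w N m i) ==> (u i == z i)].
  by apply: eq_forallb => i; rewrite sigQ_img.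
by case: [forall i, _]; rewrite ?mul1r ?mul0r.
Qed.

Definition o w N m (y x : bits (N * w.+1).+1) : bool :=
  if m is m'.+1 then xorb (y (Xp w N m')) (x (Xp w N m')) else x ord0.

Definition agree w N m (y x : bits (N * w.+1).+1) : bool :=
  [forall i : 'I_(N * w.+1).+1, (m * w.+1 < i)%N ==> (y i == x i)].

Definition F w N (Q : op w.+1) m (y x : bits (N * w.+1).+1) : algC :=
  (agree w N m y x)%:R * (y ord0 == o w N m y x)%:R *
  \prod_(j < m) Q (qarg w N j (o w N j.+1 y x) y) (qarg w N j (o w N j y x) x).

Lemma o_local w N j (y y' x : bits (N * w.+1).+1) : (j <= N)%N ->
  (forall i : 'I_(N * w.+1).+1, (0 < i <= j * w.+1)%N -> y i = y' i) ->
  o w N j y x = o w N j y' x.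
Proof.
case: j => [//|j] jN H /=; rewrite H //.
by rewrite Xp_val // mulSnr; lia.
Qed.

Lemma qarg_local w N j b (y y' : bits (N * w.+1).+1) : (j < N)%N ->
  (forall i : 'I_(N * w.+1).+1, (0 < i <= j.+1 * w.+1)%N -> y i = y' i) ->
  qarg w N j b y = qarg w N j b y'.
Proof.
move=> jN H; apply/ffunP => k; rewrite !ffunE; case: eqP => // /eqP k0.
rewrite H // bq_val // (negbTE k0) mulSnr; move: k0; case: k => k Hk /= k0; lia.
Qed.

Lemma bR0 : ((nat_of_bool false)%:R : algC) = 0. Proof. by []. Qed.
Lemma bR1 : ((nat_of_bool true)%:R : algC) = 1. Proof. by []. Qed.

Lemma cnotf_other w N m y (i : 'I_(N * w.+1).+1) : (m < N)%N ->
  nat_of_ord i != (m * w.+1 + w.+1)%N -> cnotf w N m y i = y i.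
Proof.
move=> mN H; rewrite ffunE; case: eqP => // Ei.
by move: H; rewrite Ei Xp_val // eqxx.
Qed.

Lemma cond_low w N m (y z : bits (N * w.+1).+1) : (m < N)%N ->
  [forall i, ~~ ((i == ord0) || inR w N m i) ==> (cnotf w N m y i == z i)] ->
  forall i : 'I_(N * w.+1).+1, (0 < i <= m * w.+1)%N -> z i = y i.
Proof.
move=> mN /forallP H i Hi; have := H i.
rewrite cnotf_other //; last by apply/eqP; lia.
rewrite /inR; have -> : (i == ord0) = false.
  by apply/negbTE; rewrite -val_eqE /=; apply/eqP; lia.
have -> : (m * w.+1 < i < m * w.+1 + w.+1)%N = false by apply/negbTE; apply/negP; lia.
by move=> /= /eqP.
Qed.

Definition zs w N m (y x : bits (N * w.+1).+1) : bits (N * w.+1).+1 :=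
  [ffun i => if i == ord0 then o w N m y x
             else if inR w N m i then x i else cnotf w N m y i].

Lemma zs_cond w N m (y x : bits (N * w.+1).+1) :
  [forall i, ~~ ((i == ord0) || inR w N m i) ==> (cnotf w N m y i == zs w N m y x i)].
Proof.
apply/forallP => i; apply/implyP; rewrite negb_or => /andP [i0 /negbTE iR].
by rewrite [zs _ _ _ _ _ i]ffunE (negbTE i0) iR.
Qed.

Lemma zs_unique w N m (y x z : bits (N * w.+1).+1) : (m < N)%N ->
  [forall i, ~~ ((i == ord0) || inR w N m i) ==> (cnotf w N m y i == z i)] ->
  agree w N m z x -> z ord0 == o w N m z x -> z = zs w N m y x.
Proof.
move=> mN Hc /forallP Ha /eqP Ho; apply/ffunP => i; rewrite ffunE.
case: eqP => [->|/eqP i0].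
  rewrite Ho; apply: o_local; first exact: ltnW.
  by move=> j Hj; apply: (@cond_low w N m y z mN Hc).
case: ifP => [iR|/negbT iR].
  by apply/eqP; apply: (implyP (Ha i)); move: iR; rewrite /inR => /andP [].
by move/forallP: Hc => /(_ i); rewrite negb_or i0 iR /= => /eqP.
Qed.

Lemma zs_low w N m (y x : bits (N * w.+1).+1) : (m < N)%N ->
  forall i : 'I_(N * w.+1).+1, (0 < i <= m * w.+1)%N -> zs w N m y x i = y i.
Proof. by move=> mN; apply: (@cond_low w N m y (zs w N m y x) mN (zs_cond w N m y x)). Qed.

Lemma qarg_cnotf w N m b (y : bits (N * w.+1).+1) : (m < N)%N ->
  qarg w N m b (cnotf w N m y) = qarg w N m b y.
Proof.
move=> mN; apply/ffunP => k; rewrite !qargE; case: eqP => // /eqP k0.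
rewrite cnotf_other // bq_val // (negbTE k0); move: k0; case: k => k Hk /= k0.
apply/eqP; lia.
Qed.

Lemma qarg_zs w N m b (y x : bits (N * w.+1).+1) : (m < N)%N ->
  qarg w N m b (zs w N m y x) = qarg w N m b x.
Proof.
move=> mN; apply/ffunP => k; rewrite !qargE; case: eqP => // /eqP k0.
rewrite [zs _ _ _ _ _ _]ffunE.
have -> : (bq w N m k == ord0) = false.
  apply/negbTE; rewrite -val_eqE /= bq_val // (negbTE k0); move: k0; case: k => k Hk /= k0; apply/eqP; lia.
have -> // : inR w N m (bq w N m k).
rewrite /inR bq_val // (negbTE k0); move: k0; case: k => k Hk /= k0; lia.
Qed.

Lemma agree_zs w N m (y x : bits (N * w.+1).+1) : (m < N)%N ->
  agree w N m (zs w N m y x) x =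
  agree w N m.+1 y x && (xorb (y (Xp w N m)) (y ord0) == x (Xp w N m)).
Proof.
move=> mN; have XV := Xp_val w N m mN.
apply/forallP/andP => [H|[/forallP H1 /eqP H2] i].
  split.
    apply/forallP => i; apply/implyP => Hi; have := implyP (H i).
    rewrite ffunE.
    have -> : (i == ord0) = false by apply/negbTE; rewrite -val_eqE /=; apply/eqP; lia.
    have -> : inR w N m i = false by apply/negbTE; rewrite /inR; apply/negP; lia.
    rewrite cnotf_other //; last by apply/eqP; lia.
    by apply; lia.
  have := implyP (H (Xp w N m)); rewrite ffunE.
  rewrite Xp_neq0 //.
  have -> : inR w N m (Xp w N m) = false by apply/negbTE; rewrite /inR XV; apply/negP; lia.
  by rewrite ffunE eqxx; apply; rewrite XV; lia.
apply/implyP => Hi; rewrite ffunE.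
have -> : (i == ord0) = false by apply/negbTE; rewrite -val_eqE /=; apply/eqP; lia.
case: ifP => // iR.
case: (eqVneq i (Xp w N m)) => [->|iX].
  by rewrite ffunE eqxx H2.
rewrite cnotf_other //; last by rewrite -XV; apply/eqP => E; move: iX; rewrite -val_eqE /= E eqxx.
apply: (implyP (H1 i)); move: iR iX; rewrite /inR -val_eqE /= XV => /negbT iR iX; lia.
Qed.

Lemma cnotf0 w N m (y : bits (N * w.+1).+1) : (m < N)%N -> cnotf w N m y ord0 = y ord0.
Proof. by move=> mN; rewrite ffunE eq_sym Xp_neq0. Qed.

Lemma zs0 w N m (y x : bits (N * w.+1).+1) : zs w N m y x ord0 = o w N m y x.
Proof. by rewrite ffunE eqxx. Qed.

Lemma o_zs w N j m (y x : bits (N * w.+1).+1) : (m < N)%N -> (j <= m)%N ->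
  o w N j (zs w N m y x) x = o w N j y x.
Proof.
move=> mN jm; apply: o_local; first by apply: leq_trans (ltnW mN).
move=> i Hi; apply: zs_low => //.
by move: Hi => /andP [-> /leq_trans]; apply; rewrite leq_mul2r jm orbT.
Qed.

Lemma step_eq w N (Q : op w.+1) m (y x : bits (N * w.+1).+1) : (m < N)%N ->
  embed (@sigQ w.+1 N m) Q (cnotf w N m y) (zs w N m y x) * F w N Q m (zs w N m y x) x
  = F w N Q m.+1 y x.
Proof.
move=> mN; rewrite embedQ // zs_cond bR1 mul1r cnotf0 // zs0 qarg_cnotf // qarg_zs //.
rewrite /F agree_zs // zs0 o_zs // eqxx mulr1.
rewrite (eq_bigr (fun j : 'I_m => Q (qarg w N j (o w N j.+1 y x) y) (qarg w N j (o w N j y x) x))); last first.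
  move=> j _; rewrite !o_zs //; last by apply: ltnW.
  congr (Q _ _); apply: qarg_local; first by apply: ltn_trans mN.
  move=> i Hi; apply: zs_low => //.
  by move: Hi => /andP [-> /leq_trans]; apply; rewrite leq_mul2r ltn_ord orbT.
rewrite big_ord_recr /=.
have -> : (y ord0 == xorb (y (Xp w N m)) (x (Xp w N m))) =
          (xorb (y (Xp w N m)) (y ord0) == x (Xp w N m)).
  by case: (y ord0); case: (y _); case: (x _).
case: (boolP (xorb (y (Xp w N m)) (y ord0) == x (Xp w N m))) => Hc.
  have -> : xorb (y (Xp w N m)) (x (Xp w N m)) = y ord0.
    by move/eqP: Hc <-; case: (y ord0); case: (y _).
  rewrite andbT bR1; ring.
by rewrite andbF !bR0; ring.
Qed.

Lemma Rpart_F w N (Q : op w.+1) m : (m <= N)%N ->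
  forall y x, @Rpart w.+1 N Q m y x = F w N Q m y x.
Proof.
elim: m => [_|m IH mN] y x.
  rewrite /= /opid /F big_ord0 mulr1 -natrM mulnb; congr (_ %:R); congr (nat_of_bool _).
  apply/eqP/andP => [->|[/forallP H /eqP E]].
    by split => //; apply/forallP => i; rewrite eqxx implybT.
  apply/ffunP => i; case: (eqVneq i ord0) => [->//|i0].
  apply/eqP; apply: (implyP (H i)); rewrite mul0n lt0n.
  by move: i0; rewrite -val_eqE.
rewrite /= {1}/opmul.
transitivity (\sum_(z : bits (N * w.+1).+1)
    embed (@sigQ w.+1 N m) Q (cnotf w N m y) z * F w N Q m z x).
  apply: eq_bigr => z _; rewrite IH ?(ltnW mN) // /opmul; congr (_ * _).
  rewrite (bigD1 (cnotf w N m y)) //= embedX // eqxx mul1r big1 ?addr0 //.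
  by move=> u /negbTE nu; rewrite embedX // nu bR0 mul0r.
rewrite (bigD1 (zs w N m y x)) //= big1 ?addr0; first exact: step_eq.
move=> z nz; rewrite embedQ // /F.
case: (boolP [&& [forall i, ~~ ((i == ord0) || inR w N m i) ==> (cnotf w N m y i == z i)],
      agree w N m z x & z ord0 == o w N m z x]) => [/and3P [Hc Ha Ho]|H].
  by move: nz; rewrite (@zs_unique w N m y x z mN Hc Ha Ho) eqxx.
move: H; case: [forall i, _]; case: (agree _ _ _ _ _); case: (_ == _);
  rewrite ?bR0 ?bR1 ?mul0r ?mulr0 ?mul0r ?mulr0 ?mul0r ?mulr0 //.
Qed.

Definition nsq (a : algC) := a * a^*.

Definition setb w (u : bits w.+1) (b : bool) : bits w.+1 :=
  [ffun k => if val k == 0%N then b else u k].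

Lemma setbE w (u : bits w.+1) b k : setb w u b k = if val k == 0%N then b else u k.
Proof. by rewrite ffunE. Qed.

Lemma ow_bq_out w N m (y : bits (N * w.+1).+1) u (i : 'I_(N * w.+1).+1) :
  (m < N)%N -> (i <= m * w.+1)%N || (m * w.+1 + w.+1 < i)%N ->
  ow (bq w N m) y u i = y i.
Proof.
move=> mN Hi; apply: ow_out => k; apply/eqP => E; move: Hi; rewrite -E bq_val //.
case: k {E} => k Hk /=; case: eqP => [_|/eqP k0]; lia.
Qed.

Lemma ow_Xp w N m (y : bits (N * w.+1).+1) u : (m < N)%N ->
  ow (bq w N m) y u (Xp w N m) = u ord0.
Proof. by move=> mN; rewrite /Xp ow_in //; apply: bq_inj. Qed.

Lemma qarg_ow w N m b (y : bits (N * w.+1).+1) u : (m < N)%N ->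
  qarg w N m b (ow (bq w N m) y u) = setb w u b.
Proof.
move=> mN; apply/ffunP => k; rewrite qargE setbE; case: eqP => // _.
by rewrite ow_in //; apply: bq_inj.
Qed.

Lemma ow_low w N m (y : bits (N * w.+1).+1) u : (m < N)%N ->
  forall i : 'I_(N * w.+1).+1, (i <= m * w.+1)%N -> ow (bq w N m) y u i = y i.
Proof. by move=> mN i Hi; rewrite ow_bq_out // Hi. Qed.

Lemma o_ow w N m j (y x : bits (N * w.+1).+1) u v : (m < N)%N -> (j <= m)%N ->
  o w N j (ow (bq w N m) y u) (ow (bq w N m) x v) = o w N j y x.
Proof.
move=> mN jm; case: j jm => [|j] jm /=; first by rewrite !ow_low.
have H : (j * w.+1 + w.+1 <= m * w.+1)%N by rewrite -mulSnr leq_mul2r jm orbT.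
have jN : (j < N)%N by apply: leq_trans mN; apply: ltnW.
by rewrite !ow_low // Xp_val.
Qed.

Lemma qarg_ow_low w N m j b (y : bits (N * w.+1).+1) u : (m < N)%N -> (j < m)%N ->
  qarg w N j b (ow (bq w N m) y u) = qarg w N j b y.
Proof.
move=> mN jm; apply: qarg_local; first exact: ltn_trans mN.
move=> i /andP [_ Hi]; apply: ow_low => //; apply: leq_trans Hi _.
by rewrite leq_mul2r jm orbT.
Qed.

Lemma agree_ow w N m (y x : bits (N * w.+1).+1) u v : (m < N)%N ->
  agree w N m.+1 (ow (bq w N m) y u) (ow (bq w N m) x v) = agree w N m.+1 y x.
Proof.
move=> mN; apply: eq_forallb => i; case: (boolP (m.+1 * w.+1 < i)%N) => //= Hi.
by rewrite !ow_bq_out // -mulSnr Hi orbT.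
Qed.

Lemma bq_surj w N m (i : 'I_(N * w.+1).+1) : (m < N)%N ->
  (m * w.+1 < i <= m * w.+1 + w.+1)%N -> exists k, bq w N m k = i.
Proof.
move=> mN Hi; case: (eqVneq (i : nat) (m * w.+1 + w.+1)%N) => [E|E].
  by exists ord0; apply: val_inj; rewrite /= bq_val // E.
have Hk : (i - m * w.+1 < w.+1)%N by move/eqP: E; lia.
exists (Ordinal Hk); apply: val_inj; rewrite /= bq_val //=.
case: eqP => H; lia.
Qed.

Lemma agree_ow_m w N m (y x : bits (N * w.+1).+1) u v : (m < N)%N ->
  agree w N m (ow (bq w N m) y u) (ow (bq w N m) x v) = agree w N m.+1 y x && (u == v).
Proof.
move=> mN; have binj := bq_inj w N m mN.
apply/forallP/andP => [H|[/forallP H /eqP <-] i].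
  split.
    apply/forallP => i; apply/implyP => Hi; have := implyP (H i).
    have Hi2 : (i <= m * w.+1)%N || (m * w.+1 + w.+1 < i)%N by rewrite -mulSnr Hi orbT.
    rewrite !ow_bq_out //; apply; move: Hi; rewrite mulSnr; lia.
  apply/eqP; apply/ffunP => k; have := implyP (H (bq w N m k)).
  rewrite !ow_in // => Hk; apply/eqP; apply: Hk.
  rewrite bq_val //; case: k => k Hk /=; case: eqP => [_|/eqP k0]; lia.
apply/implyP => Hi; case: (boolP (m.+1 * w.+1 < i)%N) => Hi'.
  have Hi2 : (i <= m * w.+1)%N || (m * w.+1 + w.+1 < i)%N by rewrite -mulSnr Hi' orbT.
  rewrite !ow_bq_out //; apply: (implyP (H i)) Hi'.
have [k <-] : exists k, bq w N m k = i by apply: bq_surj => //; move: Hi'; rewrite mulSnr; lia.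
by rewrite !ow_in.
Qed.

Lemma split2 k n (s : 'I_k -> 'I_n) (f : bits n -> bits n -> algC) : injective s ->
  \sum_(y : bits n) \sum_(x : bits n) f y x =
  \sum_(y : bits n | [forall j, y (s j) == false])
  \sum_(x : bits n | [forall j, x (s j) == false])
  \sum_(u : bits k) \sum_(v : bits k) f (ow s y u) (ow s x v).
Proof.
move=> inj; rewrite (split_sum (fun y => \sum_(x : bits n) f y x) inj).
apply: eq_bigr => y _.
rewrite (eq_bigr (fun u => \sum_(x : bits n | [forall j, x (s j) == false])
                            \sum_(v : bits k) f (ow s y u) (ow s x v))); last first.
  by move=> u _; rewrite (split_sum (fun x => f (ow s y u) x) inj).
by rewrite exchange_big.
Qed.

Lemma inv_sum n (h : bits n.+1 -> algC) e e' : (forall u, h (flip0 u) = h u) ->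
  \sum_(u : bits n.+1) (u ord0 == e)%:R * h u = \sum_(u : bits n.+1) (u ord0 == e')%:R * h u.
Proof.
move=> Hh; case: (eqVneq e e') => [->//|ne].
have -> : e' = ~~ e by move: ne; case: e; case: e'.
by rewrite sum_flip0; apply: eq_bigr => u _; rewrite Hh.
Qed.

Lemma split0 n (h : bits n.+1 -> algC) e :
  \sum_(u : bits n.+1) h u =
  \sum_(u : bits n.+1) (u ord0 == e)%:R * h u + \sum_(u : bits n.+1) (u ord0 == ~~ e)%:R * h u.
Proof.
rewrite -big_split /=; apply: eq_bigr => u _.
by case: (u ord0); case: e; rewrite ?bR0 ?bR1 /= ?mul0r ?mul1r ?addr0 ?add0r.
Qed.

Lemma setb_flip0 w (u : bits w.+1) b : setb w (flip0 u) b = setb w u b.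
Proof.
apply/ffunP => k; rewrite !setbE; case: eqP => // /eqP k0.
rewrite ffunE; case: eqP => // E; by rewrite E eqxx in k0.
Qed.

Lemma setb_id w (u : bits w.+1) b : u ord0 = b -> setb w u b = u.
Proof.
move=> ub; apply/ffunP => k; rewrite setbE; case: eqP => // k0.
by rewrite -ub; congr (u _); apply: val_inj.
Qed.

Definition Tm w (Q : op w.+1) b a : algC :=
  \sum_(u : bits w.+1) \sum_(v : bits w.+1)
     (u ord0 == b)%:R * (v ord0 == a)%:R * nsq (Q u v).

Lemma K_lem w (Q : op w.+1) b c :
  \sum_(u : bits w.+1) \sum_(v : bits w.+1)
     (xorb (u ord0) (v ord0) == b)%:R * nsq (Q (setb w u b) (setb w v c)) = 2 * Tm w Q b c.
Proof.
rewrite exchange_big /=.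
rewrite (eq_bigr (fun v => \sum_(u : bits w.+1) (u ord0 == b)%:R * nsq (Q (setb w u b) (setb w v c)))); last first.
  move=> v _.
  rewrite (eq_bigr (fun u : bits w.+1 => (u ord0 == xorb b (v ord0))%:R * nsq (Q (setb w u b) (setb w v c)))); last first.
    by move=> u _; congr (_ %:R * _); case: (u ord0); case: (v ord0); case: b.
  by apply: (inv_sum w (fun u => nsq (Q (setb w u b) (setb w v c)))) => u; rewrite setb_flip0.
rewrite exchange_big /= /Tm mulr_sumr; apply: eq_bigr => u _.
rewrite -mulr_sumr (split0 _ _ c).
rewrite (inv_sum w (fun v => nsq (Q (setb w u b) (setb w v c))) (~~ c) c); last by move=> v; rewrite setb_flip0.
rewrite (_ : forall S : algC, S + S = 2 * S); last by move=> S; ring.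
rewrite mulrCA; congr (_ * _); rewrite mulr_sumr; apply: eq_bigr => v _.
move: (setb_id w u b) (setb_id w v c).
case: (u ord0); case: (v ord0); case: b; case: c => Hu Hv /=;
  (try rewrite (Hu erefl)); (try rewrite (Hv erefl)); rewrite ?bR0 ?bR1; ring.
Qed.

Definition Pj w N (Q : op w.+1) m (y x : bits (N * w.+1).+1) : algC :=
  \prod_(j < m) nsq (Q (qarg w N j (o w N j.+1 y x) y) (qarg w N j (o w N j y x) x)).

Definition G w N (Q : op w.+1) m b : algC :=
  \sum_(y : bits (N * w.+1).+1) \sum_(x : bits (N * w.+1).+1)
    (y ord0 == false)%:R * (x ord0 == false)%:R * (agree w N m y x)%:R *
    (o w N m y x == b)%:R * Pj w N Q m y x.

Definition H w N (Q : op w.+1) m (y x : bits (N * w.+1).+1) : algC :=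
  (y ord0 == false)%:R * (x ord0 == false)%:R * (agree w N m.+1 y x)%:R * Pj w N Q m y x.

Lemma Pj_ow w N Q m (y x : bits (N * w.+1).+1) u v : (m < N)%N ->
  Pj w N Q m (ow (bq w N m) y u) (ow (bq w N m) x v) = Pj w N Q m y x.
Proof.
move=> mN; apply: eq_bigr => j _.
have jm := ltn_ord j; have jm' := ltnW jm.
by rewrite !o_ow // ?qarg_ow_low.
Qed.

Lemma Pj_ow_succ w N Q m (y x : bits (N * w.+1).+1) u v : (m < N)%N ->
  Pj w N Q m.+1 (ow (bq w N m) y u) (ow (bq w N m) x v) =
  Pj w N Q m y x * nsq (Q (setb w u (xorb (u ord0) (v ord0))) (setb w v (o w N m y x))).
Proof.
move=> mN; rewrite /Pj big_ord_recr; congr (_ * _).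
  apply: eq_bigr => j _; have jm := ltn_ord j; have jm' := ltnW jm.
  by rewrite !o_ow //= ?qarg_ow_low.
by rewrite /= !ow_Xp // !qarg_ow // o_ow.
Qed.

Lemma ow0 w N m (y : bits (N * w.+1).+1) u : (m < N)%N -> ow (bq w N m) y u ord0 = y ord0.
Proof. by move=> mN; rewrite ow_low. Qed.

Lemma G_succ w N (Q : op w.+1) m b : (m < N)%N ->
  G w N Q m.+1 b =
  \sum_(y : bits (N * w.+1).+1 | [forall j, y (bq w N m j) == false])
  \sum_(x : bits (N * w.+1).+1 | [forall j, x (bq w N m j) == false])
    H w N Q m y x * (2 * Tm w Q b (o w N m y x)).
Proof.
move=> mN; rewrite /G (split2 _ _ (bq w N m) _ (bq_inj w N m mN)).
apply: eq_bigr => y _; apply: eq_bigr => x _.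
rewrite -K_lem mulr_sumr; apply: eq_bigr => u _; rewrite mulr_sumr; apply: eq_bigr => v _.
rewrite !ow0 // agree_ow // Pj_ow_succ // /=.
rewrite !ow_Xp //.
case: (boolP (xorb (u ord0) (v ord0) == b)) => [/eqP E|E].
  by rewrite E bR1 /H; ring.
by rewrite bR0; ring.
Qed.

Lemma sum_diag n : \sum_(u : bits n) \sum_(v : bits n) (u == v)%:R = 2 ^+ n :> algC.
Proof.
rewrite (eq_bigr (fun _ => 1)); first by rewrite sumr_const card_bits natrX.
move=> u _; rewrite (bigD1 u) //= eqxx big1 ?addr0 // => v /negbTE.
by rewrite eq_sym => ->.
Qed.

Lemma G_same w N (Q : op w.+1) m a : (m < N)%N ->
  G w N Q m a =
  \sum_(y : bits (N * w.+1).+1 | [forall j, y (bq w N m j) == false])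
  \sum_(x : bits (N * w.+1).+1 | [forall j, x (bq w N m j) == false])
    H w N Q m y x * (o w N m y x == a)%:R * 2 ^+ w.+1.
Proof.
move=> mN; rewrite /G (split2 _ _ (bq w N m) _ (bq_inj w N m mN)).
apply: eq_bigr => y _; apply: eq_bigr => x _.
rewrite -sum_diag mulr_sumr; apply: eq_bigr => u _; rewrite mulr_sumr; apply: eq_bigr => v _.
rewrite !ow0 // agree_ow_m // o_ow // Pj_ow // -mulnb natrM /H; ring.
Qed.

Lemma G_rec w N (Q : op w.+1) m b : (m < N)%N ->
  2 ^+ w.+1 * G w N Q m.+1 b =
  2 * (Tm w Q b true * G w N Q m true + Tm w Q b false * G w N Q m false).
Proof.
move=> mN; rewrite G_succ // !G_same // !mulr_sumr -big_split /= mulr_sumr.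
apply: eq_bigr => y _; rewrite !mulr_sumr -big_split /= mulr_sumr; apply: eq_bigr => x _.
by case: (o w N m y x); rewrite /= ?bR0 ?bR1; ring.
Qed.

Lemma agree0_eq w N (y x : bits (N * w.+1).+1) :
  agree w N 0 y x -> y ord0 = x ord0 -> y = x.
Proof.
move=> /forallP H E; apply/ffunP => i; case: (eqVneq i ord0) => [->//|i0].
apply/eqP; apply: (implyP (H i)); rewrite mul0n lt0n.
by move: i0; rewrite -val_eqE.
Qed.

Lemma G0 w N (Q : op w.+1) b : G w N Q 0 b = (b == false)%:R * 2 ^+ (N * w.+1).
Proof.
rewrite /G exchange_big /= -(count0 (N * w.+1) false) mulr_sumr; apply: eq_bigr => x _.
rewrite (bigD1 x) //= big1 ?addr0; last first.
{ move=> y yx; case: (boolP (agree w N 0 y x)) => Ha; last by rewrite bR0; ring.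
  have := @agree0_eq w N y x Ha; move: yx.
  case: (y ord0); case: (x ord0) => yx E /=; try by move: yx; rewrite (E erefl) eqxx.
  all: by rewrite /= ?mulr0n ?mulr1n ?(mul0r, mulr0, mul1r, mulr1). }
have -> : agree w N 0 x x by apply/forallP => i; rewrite eqxx implybT.
rewrite /Pj big_ord0 /=; case: (x ord0); case: b; rewrite /= ?bR0 ?bR1; ring.
Qed.

Lemma nsq_F w N (Q : op w.+1) (y x : bits (N * w.+1).+1) :
  (y ord0 == false)%:R * (x ord0 == false)%:R * (F w N Q N y x * (F w N Q N y x)^*) =
  (y ord0 == false)%:R * (x ord0 == false)%:R * (agree w N N y x)%:R *
  (o w N N y x == false)%:R * Pj w N Q N y x.
Proof.
rewrite /F /Pj /nsq big_split /= !rmorphM rmorph_prod !rmorph_nat.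
move: (agree w N N y x) (o w N N y x) => a c.
by case: (y ord0); case: a; case: c; rewrite /= ?mulr0n ?mulr1n; ring.
Qed.

Lemma pacc_R w N (Q : op w.+1) :
  p_acc (Rcirc N Q) 1 = 2^-1 ^+ (N * w.+1) * G w N Q N false.
Proof.
rewrite pacc_formula /G; congr (_ * _); apply: eq_bigr => y _; apply: eq_bigr => x _.
by rewrite /Rcirc Rpart_F // nsq_F.
Qed.

Lemma col_sum w (Q : op w.+1) a : unitary Q -> Tm w Q false a + Tm w Q true a = 2 ^+ w.
Proof.
move=> [_ U2]; rewrite /Tm [X in X + _]exchange_big [X in _ + X]exchange_big.
rewrite -big_split /= -(count0 w a); apply: eq_bigr => v _.
have := U2 v v; rewrite /opmul /opadj /opid eqxx bR1 => E.
transitivity ((v ord0 == a)%:R * \sum_z (Q z v)^* * Q z v); last by rewrite E mulr1.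
rewrite mulr_sumr -big_split /=; apply: eq_bigr => u _.
by rewrite /nsq; case: (u ord0); rewrite /= ?bR0 ?bR1; ring.
Qed.

Lemma row_sum w (Q : op w.+1) b : unitary Q -> Tm w Q b false + Tm w Q b true = 2 ^+ w.
Proof.
move=> [U1 _]; rewrite /Tm -big_split /= -(count0 w b); apply: eq_bigr => u _.
have := U1 u u; rewrite /opmul /opadj /opid eqxx bR1 => E.
transitivity ((u ord0 == b)%:R * \sum_z Q u z * (Q u z)^*); last by rewrite E mulr1.
rewrite mulr_sumr -big_split /=; apply: eq_bigr => v _.
by rewrite /nsq; case: (v ord0); rewrite /= ?mulr0n ?mulr1n; ring.
Qed.

Lemma pacc_Q w (Q : op w.+1) : p_acc Q 1 = 2^-1 ^+ w * Tm w Q false false.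
Proof. by rewrite pacc_formula. Qed.

Lemma main_ind w N (Q : op w.+1) : unitary Q -> forall m, (m <= N)%N ->
  G w N Q m false = 2 ^+ (N * w.+1) * (2^-1 + 2^-1 * (2 * p_acc Q 1 - 1) ^+ m) /\
  G w N Q m true = 2 ^+ (N * w.+1) * (2^-1 - 2^-1 * (2 * p_acc Q 1 - 1) ^+ m).
Proof.
move=> HU; elim=> [_|m IH mN].
  by rewrite !G0 expr0 /= ?bR0 ?bR1; split; field.
have [IHf IHt] := IH (ltnW mN).
have Hft := row_sum w Q false HU; have Htf := col_sum w Q false HU.
have Htt := col_sum w Q true HU.
have A0 : (2 * 2 ^+ w : algC) != 0 by rewrite mulf_neq0 // ?expf_neq0 // pnatr_eq0.
have Hf := G_rec w N Q m false mN; have Ht := G_rec w N Q m true mN.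
rewrite exprS in Hf Ht.
rewrite pacc_Q exprVn exprS in IHf IHt *.
move: (_ ^+ m) IHf IHt => e IHf IHt.
move: (G w N Q m true) (G w N Q m false) (G w N Q m.+1 true) (G w N Q m.+1 false) IHf IHt Hf Ht
  => Gt Gf Gt' Gf' IHf IHt Hf Ht.
move: (Tm w Q false false) (Tm w Q false true) (Tm w Q true false) (Tm w Q true true) Hft Htf Htt Hf Ht
  => Tff Tft Ttf Ttt Hft Htf Htt Hf Ht.
have E1 : Tft = 2 ^+ w - Tff by rewrite -Hft; ring.
have E2 : Ttf = 2 ^+ w - Tff by rewrite -Htf; ring.
have E3 : Ttt = Tff.
  rewrite E1 in Htt; apply: (@addrI _ (2 ^+ w - Tff)); rewrite Htt; ring.
have A1 : (2 ^+ w : algC) != 0 by rewrite expf_neq0 // pnatr_eq0.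
split; apply: (mulfI A0); rewrite ?Hf ?Ht IHf IHt ?E1 ?E2 ?E3.
  by move: (2 ^+ w) A1 => A A1; field; rewrite A1.
by move: (2 ^+ w) A1 => A A1; field; rewrite A1.
Qed.

Theorem proposition12 (w N : nat) (Q : op w) :
  (0 < w)%N -> (0 < N)%N -> unitary Q ->
  p_acc (Rcirc N Q) 1 = 2^-1 + 2^-1 * (2 * p_acc Q 1 - 1) ^+ N.
Proof.
case: w Q => [//|w] Q _ _ HU.
rewrite pacc_R; have [-> _] := main_ind w N Q HU N (leqnn N).
rewrite mulrA -exprMn mulVf ?expr1n ?mul1r //.
by rewrite pnatr_eq0.
Qed.
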